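(* Let $p\geq 80$ be a prime, let $0<\alpha\leq \frac15$ be real, let $d\in[2,p-2]$ be an integer, and let $N$ be a positive integer. Let $I$ and $J$ be arithmetic progressions in $\mathbb{Z}/p\mathbb{Z}$ having the same common difference and satisfying $|I|=2N-1$, $|J|>(1+\alpha)N-3$, and $|I\cap (d\cdot J)|\leq \alpha N-2$. Then $N<\frac{p+3}{3+\alpha}$.
   Context: An arithmetic progression in $\mathbb{Z}/p\mathbb{Z}$ with difference $g\neq 0$ is a set of the form $\{a, a+g,\dots,a+(k-1)g\}$ with $1\le k\le p$. For $X\subseteq\mathbb{Z}/p\mathbb{Z}$ and an integer $d$, the dilate is $d\cdot X=\{dx: x\in X\}$. *)

(* Defs.v *)
From HB Require Import structures.
From mathcomp Require Import all_boot all_order all_algebra.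
Set Implicit Arguments. Unset Strict Implicit. Unset Printing Implicit Defensive.
Import Order.TTheory GRing.Theory Num.Theory.
Local Open Scope ring_scope.

Definition is_AP (p : nat) (X : {set 'F_p}) (g : 'F_p) : Prop :=
  g != 0 /\
  exists (a : 'F_p) (k : nat), (1 <= k <= p)%N /\
    X = [set a + (val i)%:R * g | i : 'I_k].

Definition dilate (p : nat) (d : nat) (X : {set 'F_p}) : {set 'F_p} :=
  [set d%:R * x | x in X].

(* Main.v *)
Require Import Defs.
From HB Require Import structures.
From mathcomp Require Import all_boot all_order all_algebra.
From mathcomp Require Import zify ring lra.
Import Order.TTheory GRing.Theory Num.Theory.

Lemma count_range a b L :
  count (fun j => (a <= j < b)%N) (iota 0 L) = (minn b L - a)%N.
Proof.
elim: L => [|L IH]; first by rewrite /= minn0.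
rewrite -addn1 iotaD count_cat IH /= add0n addn0.
case: (leqP a L) => h1; case: (ltnP L b) => h2 /=; lia.
Qed.

Lemma fdiv_spec c0 t X j : (0 < t)%N ->
  (X <= c0 + j * t)%N = ((X - c0 + t - 1) %/ t <= j)%N.
Proof.
move=> t0; have := ltn_divLR (X - c0 + t - 1) j.+1 t0.
rewrite ltnS mulSn => ->; apply/idP/idP; lia.
Qed.

Lemma count_AP c0 t L X Y : (0 < t)%N ->
  count (fun j => (X <= c0 + j * t < Y)%N) (iota 0 L) =
  (minn ((Y - c0 + t - 1) %/ t) L - (X - c0 + t - 1) %/ t)%N.
Proof.
move=> t0; rewrite -count_range; apply: eq_count => j /=.
by rewrite fdiv_spec // ltnNge fdiv_spec // -ltnNge.
Qed.

Lemma fdiv_bounds c0 t X : (0 < t)%N -> (c0 < X)%N ->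
  (X - c0 <= (X - c0 + t - 1) %/ t * t < X - c0 + t)%N.
Proof.
move=> t0 h.
have := leq_divM (X - c0 + t - 1) t.
have := ltn_ceil (X - c0 + t - 1) t0.
lia.
Qed.

Lemma count_split (T : Type) (a b c : pred T) s :
  (forall x, (c x : nat) = a x + b x) -> count c s = count a s + count b s.
Proof. move=> H; elim: s => //= x s ->; rewrite H; lia. Qed.

Lemma modlap p Q y : (Q * p <= y < Q * p + p)%N -> (y %% p = y - Q * p)%N.
Proof.
move=> /andP[h1 h2].
rewrite {1}(_ : y = Q * p + (y - Q * p))%N; last lia.
by rewrite modnMDl modn_small //; lia.
Qed.

Lemma lap_num t s p a b c L : (0 < t)%N -> (t <= s)%N -> (p <= 2 * s)%N ->
  (s <= p)%N ->
  ((c - b) * t < p - s + t)%N -> (s < (b - a) * t + t)%N -> (a <= b)%N ->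
  (minn c L - b <= 2 * (minn b L - a))%N.
Proof.
move=> t0 ts ps sp hc hb ab.
suff : (c - b <= 2 * (b - a))%N by lia.
rewrite leqNgt; apply/negP => h.
have h2 : ((2 * (b - a)).+1 * t <= (c - b) * t)%N by rewrite leq_mul2r h orbT.
move: h2; rewrite mulSn -mulnA => h2.
case: (posnP (b - a)) => hk.
  move: hb; rewrite hk mul0n add0n; lia.
have h3 : (t <= (b - a) * t)%N by rewrite leq_pmull.
nia.
Qed.


Lemma comb_num x y z w u : (x <= 2 * y + u)%N -> (z <= 2 * w)%N ->
  (x + z <= 2 * (y + w) + u)%N.
Proof. lia. Qed.

Lemma comb0_num x y z w u : (x <= 2 * y + u)%N -> (x = 0)%N -> (z <= u)%N ->
  (x + z <= 2 * (y + w) + u)%N.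
Proof. lia. Qed.

Lemma lap0_num c0 s p t L : (0 < t)%N -> (c0 < p)%N -> (s <= p)%N ->
  (minn ((p - c0 + t - 1) %/ t) L - (s - c0 + t - 1) %/ t <= (p - s + t - 1) %/ t)%N.
Proof.
move=> t0 cp sp.
set b := ((s - c0 + t - 1) %/ t)%N; set c := ((p - c0 + t - 1) %/ t)%N.
have hb : (s - c0 + t - 1 < b * t + t)%N.
  by move: (ltn_ceil (s - c0 + t - 1) t0); rewrite mulSn [(t + _)%N]addnC.
have hc : (c * t <= p - c0 + t - 1)%N by apply: leq_divM.
clearbody b c.
have : (c - b <= (p - s + t - 1) %/ t)%N.
  rewrite leq_divRL // mulnBl; lia.
lia.
Qed.

Lemma lapq_num c0 s p t L X : (0 < t)%N -> (c0 < X)%N -> (t <= s)%N -> (p <= 2 * s)%N ->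
  (s <= p)%N ->
  (minn ((X + p - c0 + t - 1) %/ t) L - (X + s - c0 + t - 1) %/ t <=
   2 * (minn ((X + s - c0 + t - 1) %/ t) L - (X - c0 + t - 1) %/ t))%N.
Proof.
move=> t0 cX ts ps sp.
have ha := fdiv_bounds c0 t X t0 cX.
have hb := fdiv_bounds c0 t (X + s) t0 (leq_trans cX (leq_addr _ _)).
have hc := fdiv_bounds c0 t (X + p) t0 (leq_trans cX (leq_addr _ _)).
set a := ((X - c0 + t - 1) %/ t)%N in ha *.
set b := ((X + s - c0 + t - 1) %/ t)%N in hb *.
set c := ((X + p - c0 + t - 1) %/ t)%N in hc *.
clearbody a b c.
have ab : (a <= b)%N.
  rewrite -(leq_pmul2r t0); lia.
apply: (@lap_num t s p) => //.
  rewrite mulnBl; lia.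
rewrite mulnBl; lia.
Qed.

Lemma core p s t c0 L : (0 < t)%N -> (t <= s)%N -> (p <= 2 * s)%N ->
  (s <= p)%N -> (c0 < p)%N ->
  (count (fun j => s <= (c0 + j * t) %% p) (iota 0 L) <=
   2 * count (fun j => (c0 + j * t) %% p < s) (iota 0 L) + (p - s + t - 1) %/ t)%N.
Proof.
move=> t0 ts ps sp cp.
set u := ((p - s + t - 1) %/ t)%N.
pose H Q := count (fun j => (s <= (c0 + j * t) %% p) && (c0 + j * t < Q * p)) (iota 0 L).
pose M Q := count (fun j => ((c0 + j * t) %% p < s) && (c0 + j * t < Q * p)) (iota 0 L).
have split Q (P : nat -> bool) :
  count (fun j => P j && (c0 + j * t < Q.+1 * p)) (iota 0 L) =
  (count (fun j => P j && (c0 + j * t < Q * p)) (iota 0 L) +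
   count (fun j => P j && (Q * p <= c0 + j * t < Q * p + p)) (iota 0 L))%N.
  apply: count_split => j; rewrite mulSn [(p + _)%N]addnC.
  case: (P j) => //=.
  case: (ltnP (c0 + j * t) (Q * p)) => h1 /=.
    by have -> : (c0 + j * t < Q * p + p)%N by lia.
  by rewrite add0n.
have hitlap Q : count (fun j => (s <= (c0 + j * t) %% p) &&
     (Q * p <= c0 + j * t < Q * p + p)) (iota 0 L) =
   count (fun j => (Q * p + s <= c0 + j * t < Q * p + p)) (iota 0 L).
  apply: eq_count => j /=.
  case h: (Q * p <= c0 + j * t < Q * p + p).
    rewrite (@modlap _ _ _ h) andbT; move: h => /andP [h1 h2]; rewrite h2 andbT.
    apply/idP/idP; lia.
  rewrite andbF; apply/esym/negbTE/negP => /andP [h1 h2]; move/negP: h; apply.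
  apply/andP; split => //; lia.
have misslap Q : count (fun j => ((c0 + j * t) %% p < s) &&
     (Q * p <= c0 + j * t < Q * p + p)) (iota 0 L) =
   count (fun j => (Q * p <= c0 + j * t < Q * p + s)) (iota 0 L).
  apply: eq_count => j /=.
  case h: (Q * p <= c0 + j * t < Q * p + p).
    rewrite (@modlap _ _ _ h) andbT; move: h => /andP [h1 h2]; rewrite h1 /=.
    apply/idP/idP; lia.
  rewrite andbF; apply/esym/negbTE/negP => /andP [h1 h2]; move/negP: h; apply.
  apply/andP; split => //; lia.
have step Q : (H Q <= 2 * M Q + u)%N.
  elim: Q => [|Q IH].
    rewrite /H /M mul0n.
    rewrite (eq_count (a2 := pred0)); first by rewrite count_pred0.
    by move=> j /=; rewrite ltn0 andbF.
  rewrite /H /M in IH *; rewrite !split hitlap misslap !count_AP //.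
  case: Q IH => [|Q] IH.
    apply: comb0_num => //.
      rewrite mul0n (eq_count (a2 := pred0)); first by rewrite count_pred0.
      by move=> j /=; rewrite ltn0 andbF.
    rewrite !mul0n !add0n; exact: lap0_num.
  apply: comb_num => //.
  have qp : (p <= Q.+1 * p)%N by rewrite leq_pmull.
  exact: (@lapq_num c0 s p t L _ t0 (leq_trans cp qp) ts ps sp).
have big : forall j, (j \in iota 0 L) -> (c0 + j * t < (c0 + L * t).+1 * p)%N.
  move=> j; rewrite mem_iota add0n => /andP [_ jL].
  have : (j * t <= L * t)%N by rewrite leq_mul2r ltnW // orbT.
  have : ((c0 + L * t).+1 <= (c0 + L * t).+1 * p)%N by rewrite leq_pmulr //; lia.
  clear; lia.
have := step (c0 + L * t).+1.
rewrite /H /M.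
rewrite (eq_in_count (a1 := fun j => _ && _) (a2 := fun j => s <= (c0 + j * t) %% p)); last first.
  by move=> j /big ->; rewrite andbT.
rewrite (eq_in_count (a1 := fun j => _ && _) (a2 := fun j => (c0 + j * t) %% p < s)) //.
by move=> j /big ->; rewrite andbT.
Qed.
Local Open Scope ring_scope.

Lemma card_count L (P : nat -> bool) : #|[set j : 'I_L | P (val j)]| = count P (iota 0 L).
Proof.
rewrite cardsE cardE /enum_mem size_filter -enumT -val_enum_ord count_map.
by apply: eq_count.
Qed.

Section Fp.
Variable p : nat.
Hypothesis pr : prime p.

Lemma valFp (x : 'F_p) : (val x < p)%N.
Proof. have h := ltn_ord x; move: (Fp_cast pr) => e; rewrite -[X in (_ < X)%N]e; exact: h. Qed.

Lemma natFp (x : 'F_p) : (val x)%:R = x.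
Proof. have := val_Fp_nat pr (val x); rewrite modn_small ?valFp // => h; exact: val_inj h. Qed.

Lemma valnat n : (n < p)%N -> val (n%:R : 'F_p) = n.
Proof. by move=> h; have := val_Fp_nat pr n; rewrite modn_small. Qed.

Lemma natFp_inj i j : (i < p)%N -> (j < p)%N -> (i%:R : 'F_p) = j%:R -> i = j.
Proof. by move=> hi hj /(congr1 val); rewrite !valnat. Qed.

Lemma pFp : (p%:R : 'F_p) = 0.
Proof. by rewrite -Fp_nat_mod // modnn. Qed.

Lemma AP_mem (a g x : 'F_p) k : g != 0 -> (k <= p)%N ->
  (x \in [set a + (val i)%:R * g | i : 'I_k]) = (val ((x - a) / g) < k)%N.
Proof.
move=> g0 kp; apply/imsetP/idP.
  move=> [i _ ->]; rewrite addrC addKr mulfK // valnat ?ltn_ord //.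
  exact: leq_trans (ltn_ord i) kp.
move=> h; exists (Ordinal h) => //=.
have e : ((nat_of_ord ((x - a) / g))%:R : 'F_p) = (x - a) / g := natFp _.
by rewrite e mulfVK // addrC subrK.
Qed.

Lemma AP_card (a g : 'F_p) k : g != 0 -> (k <= p)%N ->
  #|[set a + (val i)%:R * g | i : 'I_k]| = k.
Proof.
move=> g0 kp; rewrite card_imset ?card_ord // => i j /addrI /(mulIf g0).
move/natFp_inj => h; apply: val_inj; apply: h.
  exact: leq_trans (ltn_ord i) kp.
exact: leq_trans (ltn_ord j) kp.
Qed.

Lemma inter_card (A : {set 'F_p}) L (f : 'I_L -> 'F_p) : injective f ->
  #|A :&: [set f j | j : 'I_L]| = #|[set j : 'I_L | f j \in A]|.
Proof.
move=> inj; rewrite -(card_imset _ inj); apply: eq_card => x.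
rewrite !inE; apply/andP/imsetP.
  by move=> [xA /imsetP [j _ xe]]; exists j => //; rewrite inE -xe.
by move=> [j]; rewrite inE => jA ->; split => //; apply: imset_f.
Qed.


Lemma count_inter (a b g r : 'F_p) d t s L : g != 0 -> r != 0 ->
  (d%:R : 'F_p) != 0 -> (s <= p)%N -> (L <= p)%N -> d%:R * r = t%:R ->
  #|[set a + (val i)%:R * g | i : 'I_s] :&:
    dilate d [set b + (val j)%:R * (r * g) | j : 'I_L]| =
  count (fun j => (val ((d%:R * b - a) / g) + j * t) %% p < s)%N (iota 0 L).
Proof.
move=> g0 r0 d0 sp Lp drt.
rewrite /dilate -imset_comp inter_card; last first.
  move=> i j /= /(mulfI d0) /addrI /(mulIf (mulf_neq0 r0 g0)).
  move/natFp_inj => h; apply: val_inj; apply: h.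
    exact: leq_trans (ltn_ord i) Lp.
  exact: leq_trans (ltn_ord j) Lp.
rewrite -card_count; apply: eq_card => j; rewrite !inE /= AP_mem //.
have e : (d%:R * (b + (val j)%:R * (r * g)) - a) / g =
    (d%:R * b - a) / g + (val j * t)%:R.
  by rewrite natrM -drt; field.
rewrite e -[X in X + _](natFp) -natrD.
by have := val_Fp_nat pr (val ((d%:R * b - a) / g) + val j * t) => /= ->.
Qed.
End Fp.

Lemma u2_num m t : (2 <= t)%N -> (2 * ((m + t - 1) %/ t) <= m + 1)%N.
Proof.
move=> t2; have := leq_divM (m + t - 1) t.
set u := ((m + t - 1) %/ t)%N; clearbody u => h.
case: u h => [|u] h; first by lia.
have : (u.+1 * 2 <= u.+1 * t)%N by rewrite leq_mul2l t2 orbT.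
nia.
Qed.

Lemma AP_rev p (b g : 'F_p) L : (0 < L)%N ->
  [set b + (val j)%:R * g | j : 'I_L] =
  [set (b + (L - 1)%:R * g) + (val j)%:R * (-1 * g) | j : 'I_L].
Proof.
move=> L0; apply/setP => x; apply/imsetP/imsetP => -[i _ ->];
  exists (rev_ord i) => //=; rewrite natrB ?ltn_ord // natrB //.
  by rewrite mulrSr; ring.
by rewrite mulrSr; ring.
Qed.

Theorem lemma3p3 (R : realFieldType) (p : nat) (alpha : R) (d N : nat)
  (I J : {set 'F_p}) (g : 'F_p) :
  prime p -> (80 <= p)%N ->
  0 < alpha -> alpha <= 5^-1 ->
  (2 <= d <= p - 2)%N ->
  (0 < N)%N ->
  is_AP I g -> is_AP J g ->
  #|I| = (2 * N - 1)%N ->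
  (#|J|%:R : R) > (1 + alpha) * N%:R - 3 ->
  (#|I :&: dilate d J|%:R : R) <= alpha * N%:R - 2 ->
  (N%:R : R) < (p%:R + 3) / (3 + alpha).
Proof.
move=> pr p80 a0 a5 /andP [d2 dp] N0 [g0 [a [s [/andP [s1 sp] eI]]]]
  [_ [b [L [/andP [L1 Lp] eJ]]]] cI hJ hM.
have cs : #|I| = s by rewrite eI AP_card.
have cL : #|J| = L by rewrite eJ AP_card.
rewrite cL in hJ.
rewrite ltNge; apply/negP => hN.
rewrite ler_pdivrMr in hN; last by lra.
have h5 : alpha * N%:R <= 5^-1 * N%:R by apply: ler_wpM2r.
have hM0 : 0 <= (#|I :&: dilate d J|%:R : R) by apply: ler0n.
have pN : (p + 2 <= 4 * N)%N.
  rewrite -(ler_nat R) natrD natrM; lra.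
have s2 : (s = 2 * N - 1)%N by rewrite -cs cI.
have ps : (p <= 2 * s)%N by lia.
have dpr : (d < p)%N by lia.
have d0 : (d%:R : 'F_p) != 0.
  apply/eqP => h; have := @valnat p pr d dpr; rewrite h /=; lia.
have [t [c0 [t2 [ts [c0p hcnt]]]]] : exists t c0, [/\ (2 <= t)%N, (t <= s)%N, (c0 < p)%N &
    #|I :&: dilate d J| = count (fun j => (c0 + j * t) %% p < s)%N (iota 0 L)].
  case: (leqP d s) => ds.
    exists d, (val ((d%:R * b - a) / g)); split => //; first exact: (@valFp p pr).
    rewrite eI eJ.
    have := @count_inter p pr a b g 1 d d s L g0 (oner_neq0 _) d0 sp Lp (mulr1 _).
    by rewrite mul1r => ->.
  exists (p - d)%N, (val ((d%:R * (b + (L - 1)%:R * g) - a) / g)); split.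
  - lia.
  - lia.
  - exact: (@valFp p pr).
  rewrite eI eJ (@AP_rev p b g L L1) (@count_inter p pr _ _ _ _ d (p - d)%N) //.
    by rewrite oppr_eq0 oner_neq0.
  by rewrite natrB ?(ltnW dpr) // (@pFp p pr) mulrN1 sub0r.
set M := #|I :&: dilate d J| in hM hM0 hcnt.
have hcore := core p s t c0 L (ltnW t2) ts ps sp c0p.
have hpc : (count (fun j => s <= (c0 + j * t) %% p)%N (iota 0 L) + M)%N = L.
  rewrite hcnt addnC -[X in _ = X](size_iota 0 L) -(count_predC (fun j => (c0 + j * t) %% p < s)%N).
  by congr addn; apply: eq_count => j /=; rewrite leqNgt.
have hu := u2_num (p - s) t t2.
have fin : (2 * L + 2 * N <= 6 * M + p + 2)%N.
  rewrite -hcnt in hcore; lia.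
move: fin; rewrite -(ler_nat R) !natrD => fin.
lra.
Qed.
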